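(* Let $(X,T)$ be a topologically transitive topological dynamical system in which $X$ is a compact metric totally disconnected space, and let $0<\theta<1$. Then $\exp(2\pi i\theta)$ is a continuous eigenvalue of $T$ if and only if there exists a clopen set $U\subseteq X$ such that $1_U-\theta\cdot\mathbf 1$ is a real coboundary, i.e. $1_U-\theta\cdot \mathbf 1=F-F\circ T$ for some $F\in C(X,\mathbb R)$. Moreover, for such a clopen set $U$ one has $\mu(U)=\theta$ for every $T$-invariant Borel probability measure $\mu$ on $X$.
   Context: A topological dynamical system $(X,T)$ is a compact metric space $X$ with a homeomorphism $T$; it is topologically transitive if some point has a dense orbit. A complex number $\lambda$ is a continuous eigenvalue of $T$ if there is a continuous $f:X\to\mathbb S^1$ (equivalently a nonzero continuous $f:X\to\mathbb C$) with $f\circ T=\lambda f$. $1_U$ denotes the indicator function of $U$ and $\mathbf 1$ the constant function $1$. *)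

(* Defs.v *)
From HB Require Import structures.
From mathcomp Require Import all_boot all_order all_algebra.
From mathcomp Require Import all_classical all_reals all_analysis.
From mathcomp Require Import complex.
Import Order.TTheory GRing.Theory Num.Theory.
Import numFieldNormedType.Exports.
Local Open Scope ring_scope.
Local Open Scope classical_set_scope.

Set Implicit Arguments.
Unset Strict Implicit.
Unset Printing Implicit Defensive.

Definition homeomorphism {X : topologicalType} (T : X -> X) : Prop :=
  continuous T /\
  exists S : X -> X, [/\ continuous S, cancel T S & cancel S T].

(* full (two-sided) orbit of x under the invertible map T :
   { T^n x : n in Z } = { y | y = T^n x or x = T^n y, n in N } *)
Definition orbit {X : Type} (T : X -> X) (x : X) : set X :=
  [set y | exists n : nat, y = iter n T x \/ x = iter n T y].

Definition top_transitive {X : topologicalType} (T : X -> X) : Prop :=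
  exists x : X, closure (orbit T x) = [set: X].

Definition ccontinuous {R : realType} {X : topologicalType}
  (f : X -> R[i]) : Prop :=
  continuous ((fun x => complex.Re (f x)) : X -> R) /\
  continuous ((fun x => complex.Im (f x)) : X -> R).

Definition continuous_eigenvalue {R : realType} {X : topologicalType}
  (T : X -> X) (lambda : R[i]) : Prop :=
  exists f : X -> R[i],
    [/\ ccontinuous f, (forall x, `|f x| = 1) &
        forall x, f (T x) = lambda * f x].

Definition expi2pi {R : realType} (theta : R) : R[i] :=
  Complex (cos (2 * pi * theta)) (sin (2 * pi * theta)).

Definition real_coboundary {R : realType} {X : topologicalType}
  (T : X -> X) (g : X -> R) : Prop :=
  exists F : X -> R, continuous F /\ forall x, g x = F x - F (T x).

Definition borel_type (X : ptopologicalType) := g_sigma_algebraType (@open X).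

Definition T_invariant {R : realType} {X : ptopologicalType}
  (T : X -> X) (mu : probability (borel_type X) R) : Prop :=
  forall A : set (borel_type X), measurable A ->
    mu (T @^-1` A) = mu A.

(* Main.v *)
Require Import Defs.
From HB Require Import structures.
From mathcomp Require Import all_boot all_order all_algebra.
From mathcomp Require Import all_classical all_reals all_analysis.
From mathcomp Require Import complex.
From mathcomp Require Import lra ring.
From mathcomp Require Import measurable_realfun.
Import Order.TTheory GRing.Theory Num.Theory.
Import numFieldNormedType.Exports.
Local Open Scope ring_scope.
Local Open Scope classical_set_scope.
Set Implicit Arguments.
Unset Strict Implicit.
Unset Printing Implicit Defensive.

Lemma tdc_zero_dim (X : ptopologicalType) : hausdorff_space X ->
  compact [set: X] -> totally_disconnected [set: X] -> zero_dimensional X.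
Proof.
move=> hX cX tdX x y xy.
apply: contrapT => nU.
pose Q := [set z | forall C : set X, clopen C -> C x -> C z].
have Qy : Q y.
  move=> C cC Cx; apply: contrapT => nCy; apply: nU; exists C; split => //.
have Qx : Q x by [].
have clQ : closed Q.
  move=> z clz C cC Cx.
  have sQC : Q `<=` C by move=> w; apply.
  have := closureS sQC clz.
  by case: cC => _ /closure_id <-.
have key : forall A B : set X, closed A -> closed B -> A `&` B = set0 ->
    Q = A `|` B -> A x -> B !=set0 -> False.
  move=> A B cA cB AB0 QAB Ax [b Bb].
  have nA : set_nbhs A (~` B).
    apply/set_nbhsP; exists (~` B); split => //; first exact: closed_openC.
    by move=> z Az Bz; have : (A `&` B) z by []; rewrite AB0.
  have [D /set_nbhsP[W [oW AW WD]] clDB] := compact_normal hX cX cA nA.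
  pose V := ~` closure D.
  have oV : open V by apply: closed_openC; exact: closed_closure.
  have BV : B `<=` V by move=> z Bz /clDB.
  have WV : W `&` V = set0.
    apply/seteqP; split => // z [Wz]; apply; apply: subset_closure; exact: WD.
  have [C [cC Cx CWV]] : exists C, [/\ clopen C, C x & C `<=` W `|` V].
    apply: contrapT => hC.
    pose K := ~` (W `|` V).
    have cK : closed K by apply: open_closedC; exact: openU.
    pose F := filter_from [set C : set X | clopen C /\ C x] (fun C => C `&` K).
    have FF : Filter F.
      apply: filter_from_filter; first by exists setT; split => //; exact: clopenT.
      move=> C1 C2 [c1 x1] [c2 x2]; exists (C1 `&` C2); first by split => //; exact: clopenI.
      by move=> z [[? ?] ?]; split; split.
    have PF : ProperFilter F.
      apply: filter_from_proper => C1 [c1 x1].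
      apply: contrapT => ne; apply: hC; exists C1; split => // z C1z.
      apply: contrapT => nz; apply: ne; exists z; split => //.
    have [z [_ clz]] := cX F PF (filterT).
    rewrite clusterE in clz.
    have Kz : K z.
      have FK : F (setT `&` K).
        by exists setT => //; split => //; exact: clopenT.
      have := clz _ FK.
      have sK : setT `&` K `<=` K by move=> w [].
      move/(closureS sK).
      by move/closure_id: cK => <-.
    have Qz : Q z.
      move=> C1 c1 x1.
      have FC : F (C1 `&` K) by exists C1.
      have := clz _ FC.
      have sC : C1 `&` K `<=` C1 by move=> w [].
      move/(closureS sC).
      by case: c1 => _ /closure_id <-.
    apply: Kz; move: Qz; rewrite QAB => -[/AW Wz|/BV Vz]; [left|right] => //.
  have cCW : clopen (C `&` W).
    split; first by apply: openI => //; case: cC.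
    have -> : C `&` W = C `&` ~` V.
      apply/seteqP; split => z [Cz h]; split => //.
        by move=> Vz; have : (W `&` V) z by []; rewrite WV.
      by case: (CWV z Cz).
    apply: closedI; first by case: cC.
    by rewrite /V setCK; exact: closed_closure.
  have Qb : Q b by rewrite QAB; right.
  have [_ Wb] := Qb _ cCW (conj Cx (AW _ Ax)).
  have : (W `&` V) b by split => //; exact: BV.
  by rewrite WV.
have cQ : connected Q.
  apply: contrapT => /connectedPn [E [E0 QE [sep1 sep2]]].
  have clE : forall b, closed (E b).
    have cl0 : closure (E false) `<=` E false.
      move=> z clz.
      have : Q z.
        apply: clQ; have sEQ : E false `<=` Q by rewrite QE => ? ?; left.
        exact: (closureS sEQ clz).
      rewrite QE => -[//|E1z].
      by have : (closure (E false) `&` E true) z by []; rewrite sep1.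
    have cl1 : closure (E true) `<=` E true.
      move=> z clz.
      have : Q z.
        apply: clQ; have sEQ : E true `<=` Q by rewrite QE => ? ?; right.
        exact: (closureS sEQ clz).
      rewrite QE => -[E0z|//].
      by have : (E false `&` closure (E true)) z by []; rewrite sep2.
    by case.
  have dis : E false `&` E true = set0.
    apply/seteqP; split => // z [z0 z1]; rewrite -sep1; split => //.
    exact: subset_closure.
  have : Q x by [].
  rewrite QE => -[x0|x1].
    exact: (key _ _ (clE false) (clE true) dis QE x0 (E0 true)).
  apply: (key _ _ (clE true) (clE false) _ _ x1 (E0 false)).
    by rewrite setIC.
  by rewrite setUC.
have := connected_component_max Qx (@subsetT _ Q) cQ Qy.
rewrite tdX // => yx.
by rewrite yx eqxx in xy.
Qed.

Section Trig.
Variable R : realType.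

Lemma cos_eq1_small (x : R) : - pi <= x <= pi -> cos x = 1 -> x = 0.
Proof.
move=> /andP[h1 h2] c1.
wlog x0 : x h1 h2 c1 / 0 <= x.
  move=> H; case: (lerP 0 x) => [|x0]; first exact: H.
  apply/eqP; rewrite -oppr_eq0; apply/eqP; apply: H; rewrite ?cosN //.
  - by rewrite lerNl opprK.
  - by rewrite lerNl.
  - by rewrite oppr_ge0 ltW.
apply: (@cos_inj R); rewrite ?in_itv /= ?x0 ?h2 ?pi_ge0 ?lexx //.
by rewrite c1 cos0.
Qed.

Lemma cos2pi_per (u : R) (k : nat) : cos (u + 2 * pi * k%:R) = cos u.
Proof.
have -> : 2 * (pi : R) * k%:R = pi *+ 2 *+ k by rewrite mulr_natr mulr_natl.
exact: periodicn (@cosD2pi R) k u.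
Qed.

Lemma cos2pi_per1 (u : R) : cos (u + 2 * pi) = cos u.
Proof. by rewrite -(cos2pi_per u 1) mulr1. Qed.

Lemma sin2pi_per1 (u : R) : sin (u + 2 * pi) = sin u.
Proof. by rewrite mulr_natl; exact: sinD2pi. Qed.

Lemma int_window (t : R) : -2 < t < 1 -> cos (2 * pi * t) = 1 -> t = 0 \/ t = -1.
Proof.
move=> /andP[t1 t2] c1.
have pi0 := @pi_gt0 R.
have h := @cos_eq1_small.
have pz : forall y : R, 2 * pi * y = 0 -> y = 0.
  have p2 : 2 * pi != 0 :> R by rewrite lt0r_neq0 // mulr_gt0.
  by move=> y e; rewrite -(mulKf p2 y) e mulr0.
case: (lerP t (-(3/2))) => ta.
  exfalso.
  have : 2 * pi * (t + 2) = 0.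
    rewrite mulrDr; apply: h; last by rewrite cos2pi_per.
    apply/andP; split; nra.
  move/pz; lra.
case: (lerP t (-(1/2))) => tb.
  right.
  have : 2 * pi * (t + 1) = 0.
    rewrite mulrDr; apply: h; last by rewrite (cos2pi_per _ 1).
    apply/andP; split; nra.
  move/pz; lra.
case: (lerP t (1/2)) => tc.
  left.
  have : 2 * pi * t = 0.
    apply: h => //; apply/andP; split; nra.
  move/pz; lra.
exfalso.
have : 2 * pi * (t - 1) = 0.
  apply: h; last by rewrite -cos2pi_per1 mulrBr mulr1 subrK.
  apply/andP; split; nra.
move/pz; lra.
Qed.

Lemma arg_exists (c s : R) : c ^+ 2 + s ^+ 2 = 1 ->
  exists a : R, [/\ 0 <= a <= 1, cos (2 * pi * a) = c & sin (2 * pi * a) = s].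
Proof.
move=> cs.
have pi0 := @pi_gt0 R.
have cB : -1 <= c <= 1.
  have : c ^+ 2 <= 1 by rewrite -cs lerDl sqr_ge0.
  by move=> h; apply/andP; split; nra.
have sq : Num.sqrt (1 - c ^+ 2) = `|s|.
  by rewrite -sqrtr_sqr; congr Num.sqrt; rewrite -cs addrC addKr.
have a0 := acos_ge0 cB; have api := acos_lepi cB.
case: (lerP 0 s) => s0.
  exists (acos c / (2 * pi)); split.
  - apply/andP; split; first by apply: divr_ge0 => //; nra.
    by rewrite ler_pdivrMr ?mul1r; nra.
  - by rewrite mulrC divfK ?acosK // ?in_itv //=; nra.
  - by rewrite mulrC divfK ?sin_acos // ?sq ?ger0_norm //; nra.
exists (1 - acos c / (2 * pi)); split.
- apply/andP; split.
    by rewrite subr_ge0 ler_pdivrMr ?mul1r; nra.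
  by rewrite lerBlDr lerDl; apply: divr_ge0 => //; nra.
- rewrite mulrBr mulr1 [_ * (_ / _)]mulrC divfK; last by nra.
  by rewrite addrC cos2pi_per1 cosN acosK // in_itv.
- rewrite mulrBr mulr1 [_ * (_ / _)]mulrC divfK; last by nra.
  by rewrite addrC sin2pi_per1 sinN sin_acos // sq ltr0_norm // opprK.
Qed.

Lemma atan_recon (ur ui : R) : 0 < ur -> ur ^+ 2 + ui ^+ 2 = 1 ->
  cos (atan (ui / ur)) = ur /\ sin (atan (ui / ur)) = ui.
Proof.
move=> u0 uu.
have c : cos (atan (ui / ur)) = ur.
  rewrite cos_atan.
  have -> : 1 + (ui / ur) ^+ 2 = (ur ^-1) ^+ 2.
    have n0 := lt0r_neq0 u0.
    have -> : 1 + (ui / ur) ^+ 2 = (ur ^+ 2 + ui ^+ 2) / ur ^+ 2 by field.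
    by rewrite uu div1r exprVn.
  by rewrite sqrtr_sqr ger0_norm ?invrK // invr_ge0 ltW.
split => //.
have := atanK (ui / ur); rewrite /tan c => h.
have n0 := lt0r_neq0 u0.
by rewrite -(divfK n0 (sin _)) h divfK.
Qed.

End Trig.

Lemma eig_of_cob (R : realType) (X : topologicalType) (T : X -> X) (theta : R)
  (U : set X) (F : X -> R) : continuous F ->
  (forall x, \1_U x - theta = F x - F (T x)) ->
  continuous_eigenvalue T (expi2pi theta).
Proof.
move=> cF hF.
have cF2 : continuous (fun x => 2 * pi * F x).
  by move=> x; apply: cvgM; [exact: cvg_cst | exact: cF].
exists (fun x => Complex (cos (2 * pi * F x)) (sin (2 * pi * F x))); split.
- split => x /=.
    exact: (@continuous_comp _ _ _ (fun x => 2 * pi * F x) cos _ (cF2 x) (@continuous_cos R _)).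
  exact: (@continuous_comp _ _ _ (fun x => 2 * pi * F x) sin _ (cF2 x) (@continuous_sin R _)).
- by move=> x; rewrite normc_def /= cos2Dsin2 sqrtr1.
move=> x.
have -> : F (T x) = F x + theta - \1_U x by rewrite -[F x in RHS](subrK (F (T x))) -hF; ring.
rewrite /expi2pi.
have [c s] : cos (2 * pi * (F x + theta - \1_U x)) = cos (2 * pi * theta + 2 * pi * F x) /\
      sin (2 * pi * (F x + theta - \1_U x)) = sin (2 * pi * theta + 2 * pi * F x).
  rewrite indicE; case: (pselect (U x)) => [Ux|nUx].
    rewrite mem_set //.
    rewrite -cos2pi_per1 -sin2pi_per1.
    have -> : 2 * pi * (F x + theta - 1%:R) + 2 * pi = 2 * pi * theta + 2 * pi * F x by ring.
    by [].
  rewrite memNset //.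
  have -> : 2 * pi * (F x + theta - 0%:R) = 2 * pi * theta + 2 * pi * F x by ring.
  by [].
rewrite c s cosD sinD.
simpc.
by rewrite [_ * sin _ + _]addrC.
Qed.

Lemma part2 (R : realType) (X : ptopologicalType) (T : X -> X) (theta M : R)
  (U : set X) (F : X -> R) :
  continuous T -> open U -> (forall x, `|F x| <= M) ->
  (forall x, \1_U x - theta = F x - F (T x)) ->
  forall mu : probability (borel_type X) R, T_invariant T mu -> mu U = theta%:E.
Proof.
move=> cT oU FM hF mu inv.
pose A k := (iter k T) @^-1` U.
have citer : forall k, continuous (iter k T).
  elim => [|k ih] x /=; first exact: cvg_id.
  exact: (@continuous_comp _ _ _ (iter k T) T _ (ih x) (cT _)).
have mA : forall k, measurable (A k : set (borel_type X)).
  by move=> k; apply: sub_sigma_algebra; apply: open_comp => //.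
have muA : forall k, mu (A k) = mu U.
  elim => [|k ih] //.
  have -> : A k.+1 = T @^-1` (A k).
    apply: funext => x; rewrite /A /preimage /=; congr U.
    by rewrite -iterS iterSr.
  by rewrite inv.
have indA : forall k x, \1_(A k) x = \1_U (iter k T x) :> R.
  by move=> k x; rewrite !indicE.
have birk : forall n x, \sum_(k < n) \1_(A k) x = n%:R * theta + F x - F (iter n T x) :> R.
  elim => [|n ih] x.
    by rewrite big_ord0 /= mul0r add0r subrr.
  have e := hF (iter n T x).
  rewrite big_ord_recr /= ih indA.
  rewrite (_ : \1_U (iter n T x) = theta + (F (iter n T x) - F (T (iter n T x)))); last first.
    by rewrite -e; ring.
  rewrite mulrSr /=; ring.
have finU : mu U \is a fin_num by apply: fin_num_measure; exact: (mA 0).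
set r := fine (mu U).
have muUr : mu U = r%:E by rewrite fineK.
have r0 : 0 <= r by rewrite -lee_fin -muUr measure_ge0.
have mS : forall n, measurable_fun (setT : set (borel_type X)) (fun x : borel_type X => (\sum_(k < n) (\1_(A k) x : R)%:E)%E).
  move=> n; apply: emeasurable_sum => k.
  by apply/measurable_EFinP; exact: measurable_indic.
have S0 : forall n (x : borel_type X), (0 <= \sum_(k < n) (\1_(A k) x : R)%:E)%E.
  by move=> n x; rewrite sumEFin lee_fin; apply: sumr_ge0 => k _; rewrite indicE ler0n.
have intS : forall n, (\int[mu]_(x in (setT : set (borel_type X))) (\sum_(k < n) (\1_(A k) x : R)%:E) = (n%:R * r)%:E)%E.
  move=> n; rewrite ge0_integral_sum //; last first.
    by move=> k; apply/measurable_EFinP; exact: measurable_indic.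
  under eq_bigr => k _ do rewrite integral_indic // setIT.
  rewrite (eq_bigr (fun=> r%:E)); last by move=> k _; rewrite -muUr; exact: muA.
  by rewrite sumEFin sumr_const card_ord mulr_natl.
have Sx : forall n (x : borel_type X), (\sum_(k < n) (\1_(A k) x : R)%:E = (n%:R * theta + F x - F (iter n T x))%:E)%E.
  by move=> n x; rewrite sumEFin birk.
have FB : forall x y, F x - F y <= 2 * M /\ - (2 * M) <= F x - F y.
  move=> x y; have := FM x; have := FM y; rewrite !ler_norml => /andP[? ?] /andP[? ?].
  split; lra.
have up : forall n, n%:R * r <= n%:R * theta + 2 * M.
  move=> n; rewrite -lee_fin -intS.
  have -> : ((n%:R * theta + 2 * M)%:E = \int[mu]_(x in (setT : set (borel_type X))) (cst (n%:R * theta + 2 * M)%:E) x)%E.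
    by rewrite integral_cst // [X in (_ * X)%E](_ : _ = 1%E) ?mule1 //; exact: probability_setT.
  apply: ge0_le_integral => //.
  move=> x _; rewrite Sx lee_fin /=.
  have [h _] := FB x (iter n T x); lra.
have lo : forall n, n%:R * theta - 2 * M <= n%:R * r.
  move=> n; case: (lerP (n%:R * theta - 2 * M) 0) => h.
    by apply: (le_trans h); apply: mulr_ge0.
  rewrite -lee_fin -intS.
  have -> : ((n%:R * theta - 2 * M)%:E = \int[mu]_(x in (setT : set (borel_type X))) (cst (n%:R * theta - 2 * M)%:E) x)%E.
    by rewrite integral_cst // [X in (_ * X)%E](_ : _ = 1%E) ?mule1 //; exact: probability_setT.
  apply: ge0_le_integral => //; first by move=> x _; rewrite lee_fin ltW.
  move=> x _; rewrite Sx lee_fin /=.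
  have [_ h'] := FB x (iter n T x); lra.
have nocont : forall e B : R, 0 < e -> (forall n : nat, n%:R * e <= B) -> False.
  move=> e B e0 h.
  have := truncnS_gt (B / e); rewrite ltr_pdivrMr // => hl.
  have := h (Num.Def.trunc (B / e)).+1; lra.
rewrite muUr; congr EFin.
case: (ltgtP r theta) => // h.
  exfalso; apply: (nocont (theta - r) (2 * M)); first lra.
  by move=> n; have := lo n; rewrite mulrBr; lra.
exfalso; apply: (nocont (r - theta) (2 * M)); first lra.
by move=> n; have := up n; rewrite mulrBr; lra.
Qed.

Lemma cont_bounded (R : realType) (X : topologicalType) (F : X -> R) :
  continuous F -> compact [set: X] -> exists M, forall x, `|F x| <= M.
Proof.
move=> cF cX.
have cF' : {within [set: X], continuous F} by apply: continuous_subspaceT.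
have := compact_bounded (continuous_compact cF' cX).
move=> [M0 [_ HM]]; exists (M0 + 1) => x.
by apply: (HM (M0 + 1)); [lra | exists x].
Qed.

Definition glue (X R : Type) (D : X -> set X) (b : X -> X -> R) (d : R)
  (s : seq X) (y : X) : R :=
  foldr (fun x0 acc => if y \in D x0 then b x0 y else acc) d s.

Lemma glue_cont (X : topologicalType) (R : topologicalType) (D : X -> set X)
  (b : X -> X -> R) (d : R) (s : seq X) :
  (forall x0, clopen (D x0)) ->
  (forall x0 y, D x0 y -> b x0 @ y --> b x0 y) ->
  forall y, glue D b d s @ y --> glue D b d s y.
Proof.
move=> cD hb; elim: s => [|x0 s ih] y /=; first exact: cvg_cst.
case: (pselect (D x0 y)) => h.
  rewrite (mem_set h).
  apply: cvg_trans (hb x0 y h).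
  apply: near_eq_cvg.
  have : nbhs y (D x0) by apply: open_nbhs_nbhs; split => //; case: (cD x0).
  apply: filterS => z Dz /=.
  by rewrite (mem_set Dz).
rewrite (memNset h).
apply: cvg_trans (ih y).
apply: near_eq_cvg.
have : nbhs y (~` D x0).
  apply: open_nbhs_nbhs; split => //; apply: closed_openC; case: (cD x0) => //.
apply: filterS => z nDz /=.
by rewrite (memNset nDz).
Qed.

Lemma glue_val (X : eqType) (R : Type) (D : X -> set X) (b : X -> X -> R) (d : R) (s : seq X) (y : X) :
  (exists2 x0, x0 \in s & D x0 y) ->
  exists x0, D x0 y /\ glue D b d s y = b x0 y.
Proof.
elim: s => [|x1 s ih] [x0]; first by rewrite in_nil.
rewrite inE /= => /orP[/eqP -> Dy|xs Dy].
  by exists x1; rewrite (mem_set Dy).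
case: (pselect (D x1 y)) => h.
  by exists x1; rewrite (mem_set h).
rewrite (memNset h); apply: ih; by exists x0.
Qed.

From mathcomp Require Import finmap.
Lemma atan_small (R : realType) (d : R) : 0 < d ->
  exists2 η : R, 0 < η & forall y, `|y| < η -> `|atan y| < d.
Proof.
move=> d0.
have h : atan x @[x --> (0:R)] --> atan 0 := @continuous_atan R 0.
rewrite atan0 in h; move: h => /cvgrPdist_lt /(_ d d0).
move=> /nbhs_ballP [e /= e0 he]; exists e => // y hy.
have := he y; rewrite /ball /= sub0r normrN sub0r normrN.
by apply.
Qed.

Lemma key_ineq (R : realType) (eps eta c0 s0 c1 s1 : R) :
  0 < eta -> 0 < eps -> eps <= 1/8 -> 8 * eps <= eta ->
  c0 ^+ 2 + s0 ^+ 2 = 1 -> c1 ^+ 2 + s1 ^+ 2 = 1 ->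
  `|c0 - c1| < eps -> `|s0 - s1| < eps ->
  3/4 <= c1 * c0 + s1 * s0 /\
  `|(s1 * c0 - c1 * s0) / (c1 * c0 + s1 * s0)| < eta.
Proof.
move=> et0 ep0 e8 ee h0 h1 hc hs.
move: hc; rewrite ltr_norml => /andP[p1 p2].
move: hs; rewrite ltr_norml => /andP[q1 q2].
have c0b : -1 <= c0 <= 1 by apply/andP; split; nra.
have s0b : -1 <= s0 <= 1 by apply/andP; split; nra.
move: c0b s0b => /andP[c0l c0u] /andP[s0l s0u].
set p := c1 - c0; set q := s1 - s0.
have ec1 : c1 = c0 + p by rewrite /p; ring.
have es1 : s1 = s0 + q by rewrite /q; ring.
have ur : c1 * c0 + s1 * s0 = 1 + p * c0 + q * s0.
  by rewrite ec1 es1 -h0; ring.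
have ui : s1 * c0 - c1 * s0 = q * c0 - p * s0.
  by rewrite ec1 es1; ring.
have pl : - eps < p < eps by apply/andP; split; rewrite /p; lra.
have ql : - eps < q < eps by apply/andP; split; rewrite /q; lra.
move: pl ql => /andP[pl pu] /andP[ql qu].
have b1 : - eps <= p * c0 <= eps by apply/andP; split; nra.
have b2 : - eps <= q * s0 <= eps by apply/andP; split; nra.
have b3 : - eps <= q * c0 <= eps by apply/andP; split; nra.
have b4 : - eps <= p * s0 <= eps by apply/andP; split; nra.
move: b1 b2 b3 b4 => /andP[? ?] /andP[? ?] /andP[? ?] /andP[? ?].
have u34 : 3/4 <= c1 * c0 + s1 * s0 by rewrite ur; lra.
split => //.
have u0 : 0 < c1 * c0 + s1 * s0 by lra.
rewrite normrM normfV (gtr0_norm u0) ltr_pdivrMr // ui.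
have : `|q * c0 - p * s0| <= 2 * eps.
  by rewrite ler_norml; apply/andP; split; lra.
nra.
Qed.

Lemma lift (R : realType) (X : ptopologicalType) (c s : X -> R) (δ : R) :
  hausdorff_space X -> compact [set: X] -> zero_dimensional X ->
  continuous c -> continuous s -> (forall x, c x ^+ 2 + s x ^+ 2 = 1) -> 0 < δ ->
  exists g : X -> R, [/\ continuous g, (forall x, - δ < g x < 1 + δ) &
    (forall x, cos (2 * pi * g x) = c x /\ sin (2 * pi * g x) = s x)].
Proof.
move=> hX cX zX cc cs cs1 d0.
have [η η0 hη] := atan_small d0.
pose ε := Num.min (1/8) (η / 8).
have e0 : 0 < ε by rewrite lt_min; apply/andP; split; lra.
have e8 : ε <= 1/8 by rewrite ge_min lexx.
have ee : 8 * ε <= η.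
  have : ε <= η / 8 by rewrite ge_min lexx orbT.
  lra.
pose W x0 := [set y | `|c x0 - c y| < ε /\ `|s x0 - s y| < ε].
have Wn : forall x0, nbhs x0 (W x0).
  move=> x0.
  have := cc x0; move/cvgrPdist_lt => /(_ ε e0) h1.
  have := cs x0; move/cvgrPdist_lt => /(_ ε e0) h2.
  by apply: filterS (filterI h1 h2) => y [].
have exD : forall x0, exists D : set X, [/\ clopen D, D x0 & D `<=` W x0].
  move=> x0; have [D [Dx0 cD] DW] := @zero_dimensional_cvg _ x0 hX zX cX _ (Wn x0).
  by exists D.
have [Dfun hD] := choice exD.
have exa : forall x0, exists a : R,
    [/\ 0 <= a <= 1, cos (2 * pi * a) = c x0 & sin (2 * pi * a) = s x0].
  by move=> x0; exact: arg_exists.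
have [afun ha] := choice exa.
pose ur x0 y := c y * c x0 + s y * s x0.
pose ui x0 y := s y * c x0 - c y * s x0.
pose b x0 y := afun x0 + atan (ui x0 y / ur x0 y) / (2 * pi).
have Wprop : forall x0 y, W x0 y ->
    3/4 <= ur x0 y /\ `|ui x0 y / ur x0 y| < η.
  move=> x0 y [h1 h2].
  exact: (key_ineq η0 e0 e8 ee (cs1 x0) (cs1 y) h1 h2).
have cD : forall i, clopen (Dfun i) by move=> i; case: (hD i).
have Dii : forall i, Dfun i i by move=> i; case: (hD i).
have DW : forall i, Dfun i `<=` W i by move=> i; case: (hD i).
have bcont : forall x0 y, Dfun x0 y -> b x0 @ y --> b x0 y.
  move=> x0 y Dy.
  have [u34 _] := Wprop x0 y (DW x0 y Dy).
  have n0 : ur x0 y != 0 by apply: lt0r_neq0; lra.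
  have cur : ur x0 z @[z --> y] --> ur x0 y.
    exact: (cvgD (cvgM (cc y) (cvg_cst (c x0))) (cvgM (cs y) (cvg_cst (s x0)))).
  have cui : ui x0 z @[z --> y] --> ui x0 y.
    exact: (cvgB (cvgM (cs y) (cvg_cst (c x0))) (cvgM (cc y) (cvg_cst (s x0)))).
  have cq : (ui x0 z / ur x0 z) @[z --> y] --> ui x0 y / ur x0 y.
    exact: cvgM cui (cvgV n0 cur).
  apply: cvgD; first exact: cvg_cst.
  apply: cvgM; last exact: cvg_cst.
  apply: (@continuous_comp _ _ _ (fun z => ui x0 z / ur x0 z) atan y cq).
  exact: continuous_atan.
have cov : cover_compact [set: X] by rewrite -compact_cover.
have [S _ hS] := cov X setT Dfun (fun i _ => (cD i).1)
  (fun y _ => ex_intro2 _ _ y I (Dii y)).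
exists (glue Dfun b 0 S); split.
- by move=> y; apply: glue_cont.
- move=> y; have [x0 [Dy ->]] := glue_val b 0 (hS y I).
  have [u34 hq] := Wprop x0 y (DW x0 y Dy).
  have [/andP[a0 a1] _ _] := ha x0.
  have pi2 := @pi_ge2 R.
  rewrite /b; have := hη _ hq; set t := atan _.
  rewrite ltr_norml => /andP[t1 t2].
  set v := (2 * pi)^-1.
  have v0 : 0 < v by rewrite invr_gt0; nra.
  have v1 : v * (2 * pi) = 1 by rewrite mulVf //; apply: lt0r_neq0; nra.
  have vle : v <= 1/4 by nra.
  have tv : - δ < t * v < δ.
    apply/andP; split.
      have : 0 < (t + δ) * v by apply: mulr_gt0; lra.
      nra.
    have : 0 < (δ - t) * v by apply: mulr_gt0; lra.
    nra.
  move: tv => /andP[? ?].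
  apply/andP; split; lra.
move=> y; have [x0 [Dy ->]] := glue_val b 0 (hS y I).
have [u34 hq] := Wprop x0 y (DW x0 y Dy).
have [_ ca sa] := ha x0.
have u0 : 0 < ur x0 y by lra.
have uu : ur x0 y ^+ 2 + ui x0 y ^+ 2 = 1.
  have -> : ur x0 y ^+ 2 + ui x0 y ^+ 2 = (c y ^+ 2 + s y ^+ 2) * (c x0 ^+ 2 + s x0 ^+ 2).
    by rewrite /ur /ui; ring.
  by rewrite !cs1 mulr1.
have [ct st] := atan_recon u0 uu.
have pi0 := @pi_gt0 R.
have -> : 2 * pi * b x0 y = 2 * pi * afun x0 + atan (ui x0 y / ur x0 y).
  rewrite /b mulrDr; congr (_ + _); field; lra.
rewrite cosD sinD ct st ca sa /ur /ui.
have c01 := cs1 x0.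
split.
  have -> : c x0 * (c y * c x0 + s y * s x0) - s x0 * (s y * c x0 - c y * s x0) =
    c y * (c x0 ^+ 2 + s x0 ^+ 2) by ring.
  by rewrite c01 mulr1.
have -> : s x0 * (c y * c x0 + s y * s x0) + c x0 * (s y * c x0 - c y * s x0) =
  s y * (c x0 ^+ 2 + s x0 ^+ 2) by ring.
by rewrite c01 mulr1.
Qed.

Lemma cob_of_eig (R : realType) (X : ptopologicalType) (T : X -> X) (theta : R) :
  hausdorff_space X -> compact [set: X] -> zero_dimensional X ->
  continuous T -> 0 < theta < 1 ->
  continuous_eigenvalue T (expi2pi theta) ->
  exists U : set X, clopen U /\ real_coboundary T (fun x => \1_U x - theta).
Proof.
move=> hX cX zX cT /andP[th0 th1] [f [[cr ci] n1 fe]].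
pose c x := complex.Re (f x).
pose s x := complex.Im (f x).
have cs1 : forall x, c x ^+ 2 + s x ^+ 2 = 1.
  move=> x; have := congr1 (@complex.Re R) (n1 x); rewrite normc_def /= => h.
  rewrite -[LHS]sqr_sqrtr ?h ?expr1n //.
  by rewrite addr_ge0 // sqr_ge0.
pose δ := Num.min theta (1 - theta) / 4.
have d0 : 0 < δ by rewrite /δ divr_gt0 // lt_min th0 /=; lra.
have dt : 4 * δ <= theta.
  have : Num.min theta (1 - theta) <= theta by rewrite ge_min lexx.
  rewrite /δ; lra.
have dt' : 4 * δ <= 1 - theta.
  have : Num.min theta (1 - theta) <= 1 - theta by rewrite ge_min lexx orbT.
  rewrite /δ; lra.
have [g [cg gr gcs]] := lift hX cX zX cr ci cs1 d0.
pose h x := g (T x) - g x - theta.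
have hT : forall x, cos (2 * pi * h x) = 1.
  move=> x.
  have [cA sA] := gcs (T x).
  have [cB sB] := gcs x.
  have [cTx sTx] : c (T x) = cos (2 * pi * theta) * c x - sin (2 * pi * theta) * s x /\
                   s (T x) = cos (2 * pi * theta) * s x + sin (2 * pi * theta) * c x.
    rewrite /c /s fe /expi2pi; case: (f x) => a b /=; split => //.
  have -> : 2 * pi * h x = 2 * pi * g (T x) - (2 * pi * g x + 2 * pi * theta).
    by rewrite /h; ring.
  move: (cs1 (T x)) cTx sTx; rewrite /c /s => e cTx sTx.
  rewrite -[RHS]e cosD cosN sinN cosD sinD cA sA cB sB mulrN opprK.
  rewrite cTx sTx; ring.
have hr : forall x, h x = 0 \/ h x = -1.
  move=> x; apply: int_window (hT x).
  have := gr x; have := gr (T x).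
  move=> /andP[? ?] /andP[? ?]; apply/andP; split; rewrite /h; lra.
have ch : continuous h.
  move=> x; apply: cvgB; last exact: cvg_cst.
  apply: cvgB; last exact: cg.
  exact: (@continuous_comp _ _ _ T g x (cT x) (cg (T x))).
pose U := [set x | h x < - (1/2)].
have oU : open U.
  by have := (continuousP h).1 ch [set x | x < - (1/2)] (@open_lt R (- (1/2))).
have eU : U = ~` [set x | - (1/2) < h x].
  apply/seteqP; split => x /=.
    by rewrite /U /= => hx hx'; lra.
  rewrite /U /= => nh; case: (hr x) => e; rewrite e in nh *.
    by exfalso; apply: nh; lra.
  lra.
exists U; split.
  split => //; rewrite eU; apply: open_closedC.
  by have := (continuousP h).1 ch [set x | - (1/2) < x] (@open_gt R (- (1/2))).
exists g; split => // x.
rewrite indicE.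
case: (hr x) => hx.
  rewrite memNset /U /=; last by rewrite hx; lra.
  by move: hx; rewrite /h; lra.
rewrite mem_set /U /=; last by rewrite hx; lra.
by move: hx; rewrite /h; lra.
Qed.

Unset Implicit Arguments.
Set Strict Implicit.

Theorem mainTheorem1 (R : realType) (X : pseudoPMetricType R) (T : X -> X)
  (theta : R) :
  hausdorff_space X ->
  compact [set: X] ->
  totally_disconnected [set: X] ->
  homeomorphism T ->
  top_transitive T ->
  0 < theta < 1 ->
  (continuous_eigenvalue T (expi2pi theta) <->
     exists U : set X, clopen U /\
       real_coboundary T (fun x => \1_U x - theta))
  /\
  (forall U : set X, clopen U ->
     real_coboundary T (fun x => \1_U x - theta) ->
     forall mu : probability (borel_type X) R, T_invariant T mu ->
       mu U = theta%:E).
Proof.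
move=> hX cX tdX [cT _] _ th.
have zX := tdc_zero_dim hX cX tdX.
split.
  split.
    exact: (cob_of_eig hX cX zX cT th).
  by move=> [U [cU [F [cF hF]]]]; exact: (eig_of_cob cF hF).
move=> U [oU _] [F [cF hF]] mu inv.
have [M hM] := cont_bounded cF cX.
exact: (part2 cT oU hM hF inv).
Qed.
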